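(* Consider the multi-market oligopoly of equal capacity $\mathcal{G}$ described in the context, and suppose: each $u_x$ ($x\in E$) is concave and differentiable; $c$ is convex and differentiable; and at least one of the following holds: (a) all but at most one of the $u_x$ are strictly concave, or (b) $c$ is strictly convex. Then $\mathcal{G}$ has a pure-strategy Nash equilibrium, and every pure-strategy Nash equilibrium of $\mathcal{G}$ is strict.
   Context: Let $N=\{1,\dots,n\}$ be a set of firms (players) and $E=\{1,\dots,m\}$ a set of markets. Let $\Delta^{m-1}=\{\mathbf{v}\in\mathbb{R}^m:\mathbf{v}\ge 0,\ \mathbf{v}^{T}\mathbf{1}=1\}$. Each firm $i$ chooses a strategy $\mathbf{s}_i=(s_{ix})_{x=1}^m\in S_i=\Delta^{m-1}$. For each market $x$ let $u_x:\mathbb{R}_{\ge 0}\to\mathbb{R}_{\ge 0}$ with $u_x(0)=0$, and let $p_x(t)=u_x(t)/t$ for $t>0$. Let $c:\Delta^{m-1}\to\mathbb{R}_{\ge 0}$ be a common cost function. For a strategy profile $\mathbf{S}=(\mathbf{s}_i)_{i=1}^n$ put $s_x=\sum_{i=1}^n s_{ix}$ and $\mathbf{s}_{-i}=\sum_{j\ne i}\mathbf{s}_j$. The payoff of player $i$ is $u_i(\mathbf{s}_i;\mathbf{s}_{-i})=\sum_{x=1}^m p_x(s_x)s_{ix}-c(\mathbf{s}_i)$ (a term with $s_x=0$ is taken to be $0$). The game is $\mathcal{G}=(N,S,(u_i)_{i=1}^n)$ with $S=\prod_{i=1}^n\Delta^{m-1}$. A Nash equilibrium is strict if each player's equilibrium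 strategy is its unique best response to the others' equilibrium strategies. *)

(* Defs.v *)
From HB Require Import structures.
From mathcomp Require Import all_boot all_order all_algebra.
From mathcomp Require Import all_classical all_reals all_analysis.
Set Implicit Arguments. Unset Strict Implicit. Unset Printing Implicit Defensive.
Import Order.TTheory GRing.Theory Num.Theory.
Import numFieldNormedType.Exports.
Local Open Scope classical_set_scope.
Local Open Scope ring_scope.

Section Oligopoly.
Variables (R : realType) (n m : nat).

Definition simplex : set 'rV[R]_m :=
  [set v | (forall x : 'I_m, 0 <= v ord0 x) /\ \sum_(x < m) v ord0 x = 1].

Definition profile := 'I_n -> 'rV[R]_m.

Definition is_profile (S : profile) : Prop := forall i, simplex (S i).

Definition load (S : profile) (x : 'I_m) : R := \sum_(i < n) S i ord0 x.

Definition price (ux : R -> R) (t : R) : R := ux t / t.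

Definition payoff (u : 'I_m -> R -> R) (c : 'rV[R]_m -> R) (S : profile)
    (i : 'I_n) : R :=
  \sum_(x < m) (if load S x == 0 then 0 else price (u x) (load S x) * S i ord0 x)
  - c (S i).

Definition deviate (S : profile) (i : 'I_n) (s : 'rV[R]_m) : profile :=
  fun j => if j == i then s else S j.

Definition is_best_response u c (S : profile) (i : 'I_n) (s : 'rV[R]_m) : Prop :=
  simplex s /\
  forall s', simplex s' -> payoff u c (deviate S i s') i <= payoff u c (deviate S i s) i.

Definition is_nash u c (S : profile) : Prop :=
  is_profile S /\ forall i, is_best_response u c S i (S i).

Definition is_strict_nash u c (S : profile) : Prop :=
  is_nash u c S /\
  forall i s, is_best_response u c S i s -> s = S i.

End Oligopoly.

Definition nonneg_half {R : realType} : set R := [set t | 0 <= t].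

Definition concave_on {R : realType} (D : set R) (f : R -> R) : Prop :=
  forall a b t, D a -> D b -> 0 <= t <= 1 ->
    t * f a + (1 - t) * f b <= f (t * a + (1 - t) * b).

Definition strictly_concave_on {R : realType} (D : set R) (f : R -> R) : Prop :=
  forall a b t, D a -> D b -> a != b -> 0 < t < 1 ->
    t * f a + (1 - t) * f b < f (t * a + (1 - t) * b).

Definition convex_on_rV {R : realType} {m : nat} (D : set 'rV[R]_m)
    (f : 'rV[R]_m -> R) : Prop :=
  forall v w t, D v -> D w -> 0 <= t <= 1 ->
    f (t *: v + (1 - t) *: w) <= t * f v + (1 - t) * f w.

Definition strictly_convex_on_rV {R : realType} {m : nat} (D : set 'rV[R]_m)
    (f : 'rV[R]_m -> R) : Prop :=
  forall v w t, D v -> D w -> v != w -> 0 < t < 1 ->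
    f (t *: v + (1 - t) *: w) < t * f v + (1 - t) * f w.

Definition differentiable_on_nonneg {R : realType} (f : R -> R) : Prop :=
  (forall t : R, 0 < t -> derivable f t 1) /\
  (exists l : R, (fun h : R => h^-1 * (f h - f 0)) @ 0^'+ --> l).

(* Main.v *)
Require Import Defs.
From HB Require Import structures.
From mathcomp Require Import all_boot all_order all_algebra.
From mathcomp Require Import all_classical all_reals all_analysis.
From mathcomp Require Import ring lra.
Import Order.TTheory GRing.Theory Num.Theory.
Import numFieldNormedType.Exports.
Local Open Scope classical_set_scope.
Local Open Scope ring_scope.


Section Aux.
Variable R : realType.

Lemma quot (f : R -> R) (s d : R) : derivable f s 1 ->
  (fun h => h^-1 * (f (s + h * d) - f s)) @ 0^' --> d * derive1 f s.
Proof.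
move=> df.
have dfs : differentiable f s by apply/derivable1_diffP.
have dd : derivable f s d by apply: diff_derivable.
have -> : d * derive1 f s = 'D_d f s.
  by rewrite deriveE // diff1E.
have := dd; rewrite /derivable.
move/cvg_ex => [l Hl].
have -> : 'D_d f s = l by apply: cvg_lim.
suff -> : (fun h : R => h^-1 * (f (s + h * d) - f s)) =
  (fun h => h^-1 *: ((f \o shift s) (h *: d) - f s)) by [].
by apply/funext => h /=; rewrite [_ + s]addrC.
Qed.

Lemma quot_right (f : R -> R) (s d : R) : derivable f s 1 ->
  (fun h => h^-1 * (f (s + h * d) - f s)) @ 0^'+ --> d * derive1 f s.
Proof. by move=> df; apply: cvg_dnbhs_at_right; apply: quot. Qed.

Lemma supp (u : R -> R) (s0 s : R) : concave_on nonneg_half u -> 0 < s0 ->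
  derivable u s0 1 -> 0 <= s -> u s <= u s0 + derive1 u s0 * (s - s0).
Proof.
move=> uc s0p du sp.
have H := quot_right u s0 (s - s0) du.
rewrite -lerBlDl mulrC.
apply: (cvgr_to_ge H).
near=> h.
have h0 : 0 < h by near: h; apply: nbhs_right_gt.
have h1 : h <= 1 by near: h; apply: nbhs_right_le.
have := uc s s0 h sp (ltW s0p).
rewrite h1 ltW // => /(_ isT) Hc.
rewrite (_ : h * s + (1 - h) * s0 = s0 + h * (s - s0)) in Hc; last by ring.
rewrite ler_pdivlMl //.
move: Hc; rewrite -[_ + _ <= _]subr_ge0 => Hc.
rewrite -subr_ge0; apply: le_trans Hc _; rewrite le_eqVlt; apply/orP; left; apply/eqP; ring.
Unshelve. all: by end_near.
Qed.

Lemma supp_strict (u : R -> R) (s0 s : R) : concave_on nonneg_half u ->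
  strictly_concave_on nonneg_half u -> 0 < s0 ->
  derivable u s0 1 -> 0 <= s -> s != s0 -> u s < u s0 + derive1 u s0 * (s - s0).
Proof.
move=> uc usc s0p du sp ss0.
have i2 : 0 < (2^-1 : R) by rewrite invr_gt0 ltr0n.
have i21 : (2^-1 : R) < 1 by rewrite invf_lt1 ?ltr0n ?ltr1n.
have hm : 0 <= 2^-1 * s + (1 - 2^-1) * s0.
  by apply: (addr_ge0 (mulr_ge0 (ltW i2) sp) (mulr_ge0 _ (ltW s0p))); rewrite subr_ge0 ltW.
have H1 := supp u s0 _ uc s0p du hm.
have H2 := usc s s0 (2^-1) sp (ltW s0p) ss0.
have h2 : 0 < (2^-1 : R) < 1 by rewrite i2 i21.
have H2' := H2 h2.
rewrite (_ : u^`()%classic s0 * (2^-1 * s + (1 - 2^-1) * s0 - s0) =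
   2^-1 * (u^`()%classic s0 * (s - s0))) in H1; last by ring.
set E := u^`()%classic s0 * (s - s0) in H1 *.
set m := u (2^-1 * s + (1 - 2^-1) * s0) in H1 H2'.
have := lt_le_trans H2' H1.
set us := u s. set u0 := u s0.
move=> H; have : 2^-1 * us < 2^-1 * (u0 + E) by
  rewrite (_ : 2^-1 * (u0 + E) = u0 + 2^-1 * E - (1 - 2^-1) * u0); [|ring]; rewrite ltrBrDr.
by rewrite ltr_pM2l ?invr_gt0 ?ltr0n.
Qed.

Lemma inv_convex (x1 x2 l : R) : 0 < x1 -> 0 < x2 -> 0 <= l <= 1 ->
  (l * x1 + (1 - l) * x2)^-1 <= l / x1 + (1 - l) / x2.
Proof.
move=> x1p x2p /andP[l0 l1].
have yp : 0 < l * x1 + (1 - l) * x2.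
  have [->|lp] := eqVneq l 0; first by rewrite mul0r add0r subr0 mul1r.
  apply: ltr_pwDl; last by apply: mulr_ge0; rewrite ?subr_ge0 // ltW.
  by apply: mulr_gt0 => //; rewrite lt_neqAle eq_sym lp.
set y := l * x1 + (1 - l) * x2.
rewrite -subr_ge0.
have -> : l / x1 + (1 - l) / x2 - y^-1 = l * (1 - l) * (x1 - x2) ^+ 2 / (x1 * x2 * y).
  rewrite /y; field.
  by apply/and3P; split; rewrite ?gt_eqF //; rewrite -/y gt_eqF.
apply: divr_ge0; last by apply: ltW; apply: mulr_gt0 => //; apply: mulr_gt0.
apply: mulr_ge0; last exact: sqr_ge0.
by apply: mulr_ge0 => //; rewrite subr_ge0.
Qed.

Lemma K_conc (a t1 t2 l : R) : 0 <= a -> 0 <= t1 -> 0 <= t2 -> 0 <= l <= 1 ->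
  0 < a + (l * t1 + (1 - l) * t2) ->
  l * (t1 / (a + t1)) + (1 - l) * (t2 / (a + t2)) <=
  (l * t1 + (1 - l) * t2) / (a + (l * t1 + (1 - l) * t2)).
Proof.
move=> a0 t10 t20 /andP[l0 l1] sp.
have kle1 : forall t, 0 <= t -> t / (a + t) <= 1.
  move=> t t0; have [->|] := eqVneq (a + t) 0; first by rewrite invr0 mulr0.
  move=> ne; have atp : 0 < a + t by rewrite lt_neqAle eq_sym ne addr_ge0.
  by rewrite ler_pdivrMr // mul1r lerDr.
have [a00|ap] := eqVneq a 0.
  subst a; rewrite !add0r in sp *; rewrite [X in _ <= X]divff ?gt_eqF //.
  have := kle1 _ t10; have := kle1 _ t20; rewrite !add0r => k2 k1.
  have H1 : l * (t1 / t1) <= l by rewrite ler_piMr.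
  have H2 : (1 - l) * (t2 / t2) <= 1 - l by rewrite ler_piMr // subr_ge0.
  by apply: le_trans (lerD H1 H2) _; rewrite [l + _]addrC subrK.
have ap' : 0 < a by rewrite lt_neqAle eq_sym ap.
have e : forall t, 0 <= t -> t / (a + t) = 1 - a * (a + t)^-1.
  move=> t t0; have atp : 0 < a + t by rewrite ltr_pwDl.
  by field; rewrite gt_eqF.
rewrite !e //; last by apply: addr_ge0; apply: mulr_ge0; rewrite ?subr_ge0.
have := @inv_convex (a + t1) (a + t2) l (ltr_pwDl ap' t10) (ltr_pwDl ap' t20).
rewrite l0 l1 => /(_ isT).
have -> : l * (a + t1) + (1 - l) * (a + t2) = a + (l * t1 + (1 - l) * t2) by ring.
move=> H.
have H' : a * (a + (l * t1 + (1 - l) * t2))^-1 <= a * (l / (a + t1) + (1 - l) / (a + t2)).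
  by rewrite ler_pM2l.
rewrite (_ : l * (1 - a * (a + t1)^-1) + (1 - l) * (1 - a * (a + t2)^-1) =
  1 - a * (l / (a + t1) + (1 - l) / (a + t2))); last by ring.
by rewrite lerD2l lerN2.
Qed.


End Aux.

Section Aux2.
Variable R : realType.
Definition Gf (u : R -> R) (a t : R) : R :=
  if a + t == 0 then 0 else price u (a + t) * t.

Lemma Gf0 (u : R -> R) (a : R) : Gf u a 0 = 0.
Proof. by rewrite /Gf; case: ifP => // _; rewrite mulr0. Qed.

Lemma Gf_alt (u : R -> R) (a t : R) : a + t != 0 ->
  Gf u a t = u (a + t) * (t / (a + t)).
Proof. by move=> ne; rewrite /Gf (negbTE ne) /price -mulrA [_^-1 * t]mulrC. Qed.

Lemma Gf_bound (u : R -> R) (a s0 t : R) : 0 <= a -> 0 <= t ->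
  concave_on nonneg_half u -> 0 < s0 -> derivable u s0 1 ->
  Gf u a t <= derive1 u s0 * t + (u s0 - derive1 u s0 * s0) * (t / (a + t)).
Proof.
move=> a0 t0 uc s0p du.
have [e|ne] := eqVneq (a + t) 0.
  have -> : t = 0 by apply/eqP; rewrite eq_le t0 andbT -e lerDr.
  by rewrite Gf0 !mul0r !mulr0 addr0.
have atp : 0 < a + t by rewrite lt_neqAle eq_sym ne addr_ge0.
rewrite Gf_alt //.
have k0 : 0 <= t / (a + t) by rewrite divr_ge0 // ltW.
apply: le_trans (ler_wpM2r k0 (@supp _ u s0 _ uc s0p du (ltW atp))) _.
rewrite le_eqVlt; apply/orP; left; apply/eqP.
by field.
Qed.

Lemma Gf_bound_strict (u : R -> R) (a s0 t : R) : 0 <= a -> 0 < t ->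
  concave_on nonneg_half u -> strictly_concave_on nonneg_half u ->
  0 < s0 -> derivable u s0 1 -> a + t != s0 ->
  Gf u a t < derive1 u s0 * t + (u s0 - derive1 u s0 * s0) * (t / (a + t)).
Proof.
move=> a0 t0 uc usc s0p du ne0.
have atp : 0 < a + t by rewrite ltr_pwDr.
rewrite Gf_alt ?gt_eqF //.
have k0 : 0 < t / (a + t) by rewrite divr_gt0.
have H := @supp_strict _ u s0 (a + t) uc usc s0p du (ltW atp) ne0.
have H2 : u (a + t) * (t / (a + t)) <
   (u s0 + derive1 u s0 * (a + t - s0)) * (t / (a + t)) by rewrite ltr_pM2r.
apply: lt_le_trans H2 _.
rewrite le_eqVlt; apply/orP; left; apply/eqP.
by field; rewrite gt_eqF.
Qed.

Lemma Gf_eq (u : R -> R) (a t : R) : 0 < a + t ->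
  Gf u a t = derive1 u (a + t) * t +
     (u (a + t) - derive1 u (a + t) * (a + t)) * (t / (a + t)).
Proof.
move=> atp; rewrite Gf_alt ?gt_eqF //.
by field; rewrite gt_eqF.
Qed.


Lemma Gf_conc (u : R -> R) (a t1 t2 l : R) : 0 <= a -> 0 <= t1 -> 0 <= t2 ->
  0 <= l <= 1 -> concave_on nonneg_half u -> u 0 = 0 ->
  (forall s, 0 < s -> derivable u s 1) ->
  l * Gf u a t1 + (1 - l) * Gf u a t2 <= Gf u a (l * t1 + (1 - l) * t2).
Proof.
move=> a0 t10 t20 /andP[l0 l1] uc u0 du.
set tl := l * t1 + (1 - l) * t2.
have tl0 : 0 <= tl by rewrite addr_ge0 // mulr_ge0 // subr_ge0.
have [e|ne] := eqVneq (a + tl) 0.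
  have a00 : a = 0 by apply/eqP; rewrite eq_le a0 andbT -e lerDl.
  have tl00 : tl = 0 by apply/eqP; rewrite eq_le tl0 andbT -e lerDr.
  have p1 : 0 <= l * t1 by rewrite mulr_ge0.
  have p2 : 0 <= (1 - l) * t2 by rewrite mulr_ge0 // subr_ge0.
  have q1 : l * t1 = 0 by apply/eqP; rewrite eq_le p1 andbT -tl00 /tl lerDl.
  have q2 : (1 - l) * t2 = 0 by apply/eqP; rewrite eq_le p2 andbT -tl00 /tl lerDr.
  rewrite tl00 Gf0 //.
  have z1 : l * Gf u a t1 = 0.
    move/eqP: q1; rewrite mulf_eq0 => /orP[/eqP->|/eqP->]; first by rewrite mul0r.
    by rewrite Gf0 ?mulr0.
  have z2 : (1 - l) * Gf u a t2 = 0.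
    move/eqP: q2; rewrite mulf_eq0 => /orP[/eqP->|/eqP->]; first by rewrite mul0r.
    by rewrite Gf0 ?mulr0.
  by rewrite z1 z2 addr0.
have s0p : 0 < a + tl by rewrite lt_neqAle eq_sym ne addr_ge0.
set s0 := a + tl.
have ds0 := du _ s0p.
set D := derive1 u s0.
set al := u s0 - D * s0.
have al0 : 0 <= al.
  have := @supp _ u s0 0 uc s0p ds0 (lexx 0).
  by rewrite u0 -/D /al => H; rewrite subr_ge0 -[X in X <= _]addr0 -(subrr (D * s0)) addrA -/D; lra.
have B1 := @Gf_bound u a s0 t1 a0 t10 uc s0p ds0.
have B2 := @Gf_bound u a s0 t2 a0 t20 uc s0p ds0.
rewrite -/D -/al in B1 B2.
rewrite [Gf u a tl]Gf_eq // -/s0 -/D -/al.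
have K := @K_conc _ a t1 t2 l a0 t10 t20 (introT andP (conj l0 l1)) s0p.
rewrite -/tl -/s0 in K.
have l1' : 0 <= 1 - l by rewrite subr_ge0.
apply: le_trans (lerD (ler_wpM2l l0 B1) (ler_wpM2l l1' B2)) _.
set k1 := t1 / (a + t1). set k2 := t2 / (a + t2).
rewrite (_ : l * (D * t1 + al * k1) + (1 - l) * (D * t2 + al * k2) =
   D * tl + al * (l * k1 + (1 - l) * k2)); last by rewrite /tl; ring.
by rewrite lerD2l ler_wpM2l.
Qed.


Lemma Gf_conc_strict (u : R -> R) (a t1 t2 l : R) : 0 <= a -> 0 <= t1 -> 0 <= t2 ->
  0 < l < 1 -> t1 != t2 -> concave_on nonneg_half u ->
  strictly_concave_on nonneg_half u -> u 0 = 0 ->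
  (forall s, 0 < s -> derivable u s 1) ->
  l * Gf u a t1 + (1 - l) * Gf u a t2 < Gf u a (l * t1 + (1 - l) * t2).
Proof.
move=> a0 t10 t20 /andP[l0 l1] t12 uc usc u0 du.
set tl := l * t1 + (1 - l) * t2.
have l1' : 0 < 1 - l by rewrite subr_gt0.
have tlp : 0 < tl.
  have [t1p|] := ltP 0 t1.
    by apply: (lt_le_trans (mulr_gt0 l0 t1p)); rewrite lerDl mulr_ge0 // ltW.
  move=> t1n; have t1z : t1 = 0 by apply/eqP; rewrite eq_le t1n t10.
  have t2p : 0 < t2 by rewrite lt_neqAle t20 andbT -t1z.
  by apply: (lt_le_trans (mulr_gt0 l1' t2p)); rewrite lerDr mulr_ge0 // ltW.
have s0p : 0 < a + tl by apply: (lt_le_trans tlp); rewrite lerDr.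
set s0 := a + tl.
have ds0 := du _ s0p.
set D := derive1 u s0.
set al := u s0 - D * s0.
have al0 : 0 <= al.
  have := @supp _ u s0 0 uc s0p ds0 (lexx 0).
  by rewrite u0 -/D /al => H; rewrite subr_ge0 -[X in X <= _]addr0 -(subrr (D * s0)) addrA -/D; lra.
have n1 : a + t1 != s0.
  rewrite /s0 /tl; apply/negP => /eqP H.
  have : (1 - l) * (t2 - t1) = (a + (l * t1 + (1 - l) * t2)) - (a + t1) by ring.
  rewrite -H subrr.
  by move/eqP; rewrite mulf_eq0 (gt_eqF l1') /= subr_eq0 eq_sym (negbTE t12).
have n2 : a + t2 != s0.
  rewrite /s0 /tl; apply/negP => /eqP H.
  have : l * (t1 - t2) = (a + (l * t1 + (1 - l) * t2)) - (a + t2) by ring.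
  rewrite -H subrr.
  by move/eqP; rewrite mulf_eq0 (gt_eqF l0) /= subr_eq0 (negbTE t12).
have B1 := @Gf_bound u a s0 t1 a0 t10 uc s0p ds0.
have B2 := @Gf_bound u a s0 t2 a0 t20 uc s0p ds0.
rewrite -/D -/al in B1 B2.
rewrite [Gf u a tl]Gf_eq // -/s0 -/D -/al.
have K := @K_conc _ a t1 t2 l a0 t10 t20 (introT andP (conj (ltW l0) (ltW l1))) s0p.
rewrite -/tl -/s0 in K.
set k1 := t1 / (a + t1) in B1 K. set k2 := t2 / (a + t2) in B2 K.
have key : l * Gf u a t1 + (1 - l) * Gf u a t2 <
    l * (D * t1 + al * k1) + (1 - l) * (D * t2 + al * k2).
  have [t1p|t1n] := ltP 0 t1.
    have S1 := @Gf_bound_strict u a s0 t1 a0 t1p uc usc s0p ds0 n1.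
    rewrite -/D -/al -/k1 in S1.
    by apply: ltr_leD; [rewrite ltr_pM2l|rewrite ler_wpM2l // ltW].
  have t1z : t1 = 0 by apply/eqP; rewrite eq_le t1n t10.
  have t2p : 0 < t2 by rewrite lt_neqAle t20 andbT -t1z.
  have S2 := @Gf_bound_strict u a s0 t2 a0 t2p uc usc s0p ds0 n2.
  rewrite -/D -/al -/k2 in S2.
  by apply: ler_ltD; [rewrite ler_wpM2l // ltW|rewrite ltr_pM2l].
apply: lt_le_trans key _.
rewrite (_ : l * (D * t1 + al * k1) + (1 - l) * (D * t2 + al * k2) =
   D * tl + al * (l * k1 + (1 - l) * k2)); last by rewrite /tl; ring.
by rewrite lerD2l ler_wpM2l.
Qed.
End Aux2.

Arguments Gf {R}.
Section Game.
Variables (R : realType) (n m : nat).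

Definition others (S : profile R n m) (i : 'I_n) (x : 'I_m) : R :=
  \sum_(j < n | j != i) S j ord0 x.

Lemma payoff_dev (u : 'I_m -> R -> R) c (S : profile R n m) i w :
  payoff u c (deviate S i w) i =
  \sum_(x < m) Gf (u x) (others S i x) (w ord0 x) - c w.
Proof.
rewrite /payoff.
have -> : deviate S i w i = w by rewrite /deviate eqxx.
congr (_ - _).
apply: eq_bigr => x _.
rewrite /load (bigD1 i) //=.
have -> : deviate S i w i = w by rewrite /deviate eqxx.
rewrite /Gf /others addrC.
rewrite (eq_bigr (fun j => S j ord0 x)) //.
by move=> j /negbTE ji; rewrite /deviate ji.
Qed.

Lemma others_ge0 (S : profile R n m) i x : is_profile S -> 0 <= others S i x.
Proof. by move=> PS; apply: sumr_ge0 => j _; case: (PS j) => + _; apply. Qed.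

Lemma deviate_id (S : profile R n m) i : deviate S i (S i) = S.
Proof. by apply/funext => j; rewrite /deviate; case: eqP => // ->. Qed.

Lemma simplex_conv (v w : 'rV[R]_m) (t : R) : simplex v -> simplex w ->
  0 <= t <= 1 -> simplex (t *: v + (1 - t) *: w).
Proof.
move=> [v0 v1] [w0 w1] /andP[t0 t1]; split.
  move=> x; rewrite !mxE; apply: addr_ge0; apply: mulr_ge0 => //.
  by rewrite subr_ge0.
rewrite (eq_bigr (fun x => t * v ord0 x + (1 - t) * w ord0 x)); last by move=> x _; rewrite !mxE.
by rewrite big_split /= -!mulr_sumr v1 w1 !mulr1 addrC subrK.
Qed.


Lemma ltr_sum_one (I : finType) (f g : I -> R) (x : I) :
  (forall y, f y <= g y) -> f x < g x -> \sum_y f y < \sum_y g y.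
Proof.
move=> fg fgx; rewrite (bigD1 x) //= [X in _ < X](bigD1 x) //=.
by apply: ltr_leD => //; apply: ler_sum => y _.
Qed.

Lemma exists_diff (s v : 'rV[R]_m) (x0 : 'I_m) : simplex s -> simplex v -> s != v ->
  exists x, x != x0 /\ s ord0 x != v ord0 x.
Proof.
move=> [_ s1] [_ v1] ne.
case: (pselect (exists x, x != x0 /\ s ord0 x != v ord0 x)) => // nex.
have E : forall x, x != x0 -> s ord0 x = v ord0 x.
  move=> x hx; apply/eqP; apply/negPn/negP => H; apply: nex; by exists x.
have E0 : s ord0 x0 = v ord0 x0.
  have hs : \sum_(x < m) s ord0 x = \sum_(x < m) v ord0 x by rewrite s1 v1.
  rewrite (bigD1 x0) //= [RHS](bigD1 x0) //= in hs.
  rewrite (eq_bigr (fun x => v ord0 x)) in hs; last by move=> x /E.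
  exact: addIr hs.
exfalso; move/eqP: ne; apply; apply/matrixP => a b; rewrite (ord1 a).
by have [->|/E] := eqVneq b x0.
Qed.

Lemma nash_strict (u : 'I_m -> R -> R) (c : 'rV[R]_m -> R)
  (hu0 : forall x, u x 0 = 0)
  (hu_conc : forall x, concave_on nonneg_half (u x))
  (hu_der : forall x s, 0 < s -> derivable (u x) s 1)
  (hc_conv : convex_on_rV (@simplex R m) c)
  (hstrict : (exists x0 : 'I_m, forall x, x != x0 ->
                 strictly_concave_on nonneg_half (u x))
             \/ strictly_convex_on_rV (@simplex R m) c)
  (S : profile R n m) : is_nash u c S -> is_strict_nash u c S.
Proof.
move=> HN; split => // i s [ss sbest].
case: HN => PS best; have [vS vbest] := best i.
set v := S i in vS vbest *.
case: (eqVneq s v) => // ne; exfalso.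
have i2 : 0 < (2^-1 : R) by rewrite invr_gt0 ltr0n.
have i21 : (2^-1 : R) < 1 by rewrite invf_lt1 ?ltr0n ?ltr1n.
have hl : 0 <= (2^-1 : R) <= 1 by rewrite !ltW.
set w := 2^-1 *: s + (1 - 2^-1) *: v.
have ws : simplex w by apply: simplex_conv.
have H1 := sbest w ws.
have H3 := sbest v vS.
have H2 := vbest s ss.

rewrite !payoff_dev in H1 H2 H3.
rewrite -/v in H2.
set SG := fun z : 'rV[R]_m => \sum_(x < m) Gf (u x) (others S i x) (z ord0 x).
have wE : forall x, w ord0 x = 2^-1 * s ord0 x + (1 - 2^-1) * v ord0 x.
  by move=> x; rewrite !mxE.
have Aw : forall x, 2^-1 * Gf (u x) (others S i x) (s ord0 x) +
   (1 - 2^-1) * Gf (u x) (others S i x) (v ord0 x) <= Gf (u x) (others S i x) (w ord0 x).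
  move=> x; rewrite wE; apply: Gf_conc => //; first exact: others_ge0.
  - by case: ss => + _; apply.
  - by case: vS => + _; apply.
  - exact: hu_der.
have SGsum : 2^-1 * SG s + (1 - 2^-1) * SG v =
   \sum_(x < m) (2^-1 * Gf (u x) (others S i x) (s ord0 x) +
   (1 - 2^-1) * Gf (u x) (others S i x) (v ord0 x)).
  by rewrite /SG big_split /= !mulr_sumr.
have Cw := hc_conv s v (2^-1) ss vS hl.
rewrite -/w in Cw.
have key : 2^-1 * (SG s - c s) + (1 - 2^-1) * (SG v - c v) < SG w - c w.
  rewrite (_ : 2^-1 * (SG s - c s) + (1 - 2^-1) * (SG v - c v) =
     (2^-1 * SG s + (1 - 2^-1) * SG v) - (2^-1 * c s + (1 - 2^-1) * c v)); last by ring.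
  case: hstrict => [[x0 Hx0]|Hc].
    apply: ltr_leB => //.
    rewrite SGsum.
    have [x [hx1 hx2]] := @exists_diff s v x0 ss vS ne.
    apply: (@ltr_sum_one _ _ _ x) => //.
    rewrite wE; apply: Gf_conc_strict => //; first exact: others_ge0.
    - by case: ss => + _; apply.
    - by case: vS => + _; apply.
    - by rewrite i2 i21.
    - exact: Hx0.
    - exact: hu_der.
  apply: ler_ltB; first by rewrite SGsum; apply: ler_sum => x _; apply: Aw.
  by apply: Hc => //; rewrite i2 i21.
rewrite -/(SG s) -/(SG v) -/(SG w) in H1 H2 H3.
have Eq : SG s - c s = SG v - c v by apply/eqP; rewrite eq_le H2 H3.
move: key; rewrite -Eq (_ : 2^-1 * (SG s - c s) + (1 - 2^-1) * (SG s - c s) = SG s - c s); last by ring.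
by move/(le_lt_trans H1); rewrite ltxx.
Qed.
End Game.

Section Ext.
Variables (R : realType) (u : R -> R).
Hypothesis hu0 : u 0 = 0.
Hypothesis hd : forall t, 0 < t -> derivable u t 1.
Hypothesis hr : exists l : R, (fun h : R => h^-1 * (u h - u 0)) @ (0:R)^'+ --> l.

Definition Lr := lim ((fun h : R => h^-1 * (u h - u 0)) @ (0:R)^'+).

Lemma Lr_cvg : (fun h : R => h^-1 * (u h - u 0)) @ (0:R)^'+ --> Lr.
Proof.
have [l Hl] := hr.
by have -> : Lr = l by apply: cvg_lim.
Qed.

Definition pt (t : R) : R := if 0 < t then u t / t else Lr.

Lemma pt_near (s : R) : 0 < s -> \forall t \near s, pt t = u t / t.
Proof.
move=> sp; near=> t; rewrite /pt ifT //.
near: t; exact: lt_nbhsr.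
Unshelve. all: by end_near.
Qed.

Lemma pt_der (s : R) : 0 < s -> derivable pt s 1.
Proof.
move=> sp.
have H : derivable (fun t => u t * (id t)^-1) s 1.
  apply: derivableM; first exact: hd.
  by apply: derivableV; [rewrite gt_eqF|apply: derivable_id].
apply: near_eq_derivable H.
near=> t; rewrite /pt ifT //.
near: t; exact: lt_nbhsr.
Unshelve. all: by end_near.
Qed.

Lemma pt_cont (s : R) : {for s, continuous pt}.
Proof.
have [sp|sn|<-] := ltgtP 0 s.
- apply/differentiable_continuous; apply/derivable1_diffP; exact: pt_der.
- rewrite /prop_for /continuous_at {2}/pt ifN; last by rewrite -leNgt ltW.
  apply: cvg_near_cst; near=> t; rewrite /pt ifN // -leNgt ltW //.
  by near: t; exact: lt_nbhsl.
- apply/left_right_continuousP; split.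
    rewrite {2}/pt ltxx; apply: cvg_near_cst.
    by near=> t; rewrite /pt ifN // -leNgt ltW //; near: t; exact: nbhs_left_lt.
  rewrite {2}/pt ltxx.
  apply: cvg_trans Lr_cvg.
  apply: near_eq_cvg; near=> t.
  have tp : 0 < t by near: t; exact: nbhs_right_gt.
  by rewrite /pt tp hu0 subr0 mulrC.
Unshelve. all: by end_near.
Qed.

Lemma pt_continuous : continuous pt.
Proof. by move=> s; apply: pt_cont. Qed.

Definition Uf (s : R) : R := (\int[@lebesgue_measure R]_(t in `[(-1)%R, s]) (pt t))%R.

Lemma Uf_der (s : R) : -1 < s -> derivable Uf s 1 /\ derive1 Uf s = pt s.
Proof.
move=> s1.
have hs : s < s + 1 by rewrite ltrDl.
have := @continuous_FTC1_closed R pt (-1) s (s + 1) hs.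
apply => //; last exact: pt_cont.
apply: continuous_compact_integrable; first exact: segment_compact.
apply: continuous_subspaceT; exact: pt_continuous.
Qed.
End Ext.


Arguments Gf {R}.
Arguments pt {R}.
Arguments Uf {R}.
Section Match.
Variables (R : realType) (u : R -> R).
Hypothesis hu0 : u 0 = 0.
Hypothesis hd : forall t, 0 < t -> derivable u t 1.
Hypothesis hr : exists l : R, (fun h : R => h^-1 * (u h - u 0)) @ (0:R)^'+ --> l.

Definition ut (t : R) := t * pt u t.
Definition phi (N y : R) := (ut (N * y) + (N - 1) * Uf u (N * y)) / (N * N).

Lemma Gf_pt (a t : R) : 0 <= a -> 0 <= t -> Gf u a t = t * pt u (a + t).
Proof.
move=> a0 t0; rewrite /Gf; case: ifPn => [/eqP e|ne].
  have -> : t = 0 by apply/eqP; rewrite eq_le t0 andbT -e lerDr.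
  by rewrite mul0r.
have atp : 0 < a + t by rewrite lt_neqAle eq_sym ne addr_ge0.
by rewrite /pt atp /price mulrC.
Qed.

Lemma cvg_ymul (y K : R) (q : R -> R) : (y != 0 -> q @ (0:R)^'+ --> K) ->
  (fun h => y * q h) @ (0:R)^'+ --> y * K.
Proof.
have [->|yn] := eqVneq y 0.
  by move=> _; rewrite mul0r; under eq_fun do rewrite mul0r; apply: cvg_cst.
by move=> /(_ isT) H; apply: cvgMl_tmp.
Qed.

Lemma pt_comp_cvg (s d : R) : (fun h => pt u (s + h * d)) @ (0:R)^'+ --> pt u s.
Proof.
have H : (fun h : R => s + h * d) @ (0:R)^'+ --> s.
  have H0 : (fun h : R => h) @ (0:R)^'+ --> (0:R).
    by apply: cvg_at_right_filter; exact: cvg_id.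
  have := cvgD (cvg_cst s) (@cvgMr_tmp _ _ _ _ _ _ d H0).
  by move=> HH; rewrite mul0r addr0 in HH; exact: HH.
exact: (continuous_cvg _ (@pt_cont R u hu0 hd hr s) H).
Qed.


Lemma match_cvg (N y d : R) : 1 <= N -> 0 <= y -> 0 <= y + d ->
  (fun h => h^-1 * ((Gf u ((N - 1) * y) (y + h * d) - Gf u ((N - 1) * y) y)
                   - (phi N (y + h * d) - phi N y))) @ (0:R)^'+ --> 0.
Proof.
move=> N1 y0 yd0.
have Np : 0 < N by apply: lt_le_trans N1; exact: ltr01.
have a0 : 0 <= (N - 1) * y by rewrite mulr_ge0 // subr_ge0.
set s := N * y.
have s0 : 0 <= s by rewrite mulr_ge0 // ltW.
pose g := fun h => d * pt u (s + h * d) + y * (h^-1 * (pt u (s + h * d) - pt u s))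
  - ((N * d) * pt u (s + h * (N * d)) + s * (h^-1 * (pt u (s + h * (N * d)) - pt u s))
     + (N - 1) * (h^-1 * (Uf u (s + h * (N * d)) - Uf u s))) / (N * N).
have E : \forall h \near (0:R)^'+, g h =
   h^-1 * ((Gf u ((N - 1) * y) (y + h * d) - Gf u ((N - 1) * y) y)
                   - (phi N (y + h * d) - phi N y)).
  near=> h.
  have h0 : 0 < h by near: h; exact: nbhs_right_gt.
  have h1 : h <= 1 by near: h; apply: nbhs_right_le; exact: ltr01.
  have yh : 0 <= y + h * d.
    rewrite (_ : y + h * d = (1 - h) * y + h * (y + d)); last by ring.
    by rewrite addr_ge0 // mulr_ge0 // ?subr_ge0 // ltW.
  rewrite !Gf_pt //.
  rewrite (_ : (N - 1) * y + (y + h * d) = s + h * d); last by rewrite /s; ring.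
  rewrite (_ : (N - 1) * y + y = s); last by rewrite /s; ring.
  rewrite /phi /ut.
  rewrite (_ : N * (y + h * d) = s + h * (N * d)); last by rewrite /s; ring.
  rewrite -/s /g.
  set P1 := pt u (s + h * d). set P0 := pt u s. set P2 := pt u (s + h * (N * d)).
  set U2 := Uf u (s + h * (N * d)). set U0 := Uf u s.
  rewrite /s; field.
  by rewrite gt_eqF // gt_eqF.
have ypos : y != 0 -> 0 < s.
  by move=> yn; rewrite mulr_gt0 // lt_neqAle eq_sym yn.
have spos : s != 0 -> 0 < s by move=> sn; rewrite lt_neqAle eq_sym sn.
have [dU eU] := @Uf_der R u hu0 hd hr s (lt_le_trans (ltrN10 R) s0).
have Lg : g @ (0:R)^'+ --> (d * pt u s + y * (d * derive1 (pt u) s)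
   - ((N * d) * pt u s + s * ((N * d) * derive1 (pt u) s)
      + (N - 1) * ((N * d) * pt u s)) / (N * N)).
  apply: cvgB; first apply: cvgD.
  - apply: cvgMl_tmp; exact: pt_comp_cvg.
  - apply: cvg_ymul => yn; apply: quot_right; exact: (@pt_der R u hd s (ypos yn)).
  apply: cvgMr_tmp; apply: cvgD; first apply: cvgD.
  - apply: cvgMl_tmp; exact: pt_comp_cvg.
  - apply: cvg_ymul => sn; apply: quot_right; exact: (@pt_der R u hd s (spos sn)).
  - apply: cvgMl_tmp; rewrite -eU; apply: quot_right; exact: dU.
have L0 : d * pt u s + y * (d * derive1 (pt u) s)
   - ((N * d) * pt u s + s * ((N * d) * derive1 (pt u) s)
      + (N - 1) * ((N * d) * pt u s)) / (N * N) = 0.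
  by rewrite /s; field; rewrite gt_eqF.
rewrite L0 in Lg.
exact: (cvg_trans (near_eq_cvg E) Lg).
Unshelve. all: by end_near.
Qed.
End Match.


Section Topo.
Variable R : realType.

Lemma cvg_sumR (T : Type) (F : set_system T) {FF : Filter F} (I : Type) (r : seq I)
  (f : I -> T -> R) (l : I -> R) :
  (forall i, f i @ F --> l i) ->
  (fun t => \sum_(i <- r) f i t) @ F --> \sum_(i <- r) l i.
Proof.
move=> H; elim: r => [|a r IH].
  rewrite big_nil; under eq_fun do rewrite big_nil; exact: cvg_cst.
rewrite big_cons; under eq_fun do rewrite big_cons.
exact: cvgD.
Qed.

Lemma sum_coord_continuous (m : nat) :
  continuous (fun v : 'rV[R]_m => \sum_(x < m) v ord0 x).
Proof. by move=> v; apply: (@cvg_sumR _ (nbhs v) _) => x; exact: coord_continuous. Qed.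

Lemma simplex_closed (m : nat) : closed (@simplex R m).
Proof.
have -> : @simplex R m = (\bigcap_(x in setT) ((fun v : 'rV[R]_m => v ord0 x) @^-1` [set t | 0 <= t]))
   `&` ((fun v : 'rV[R]_m => \sum_(x < m) v ord0 x) @^-1` [set t | t = 1]).
  apply/seteqP; split => v.
    by move=> [v0 v1]; split => //= x _; apply: v0.
  by move=> [v0 v1]; split => // x; apply: v0.
apply: closedI.
  apply: closed_bigI => x _.
  by apply: (proj1 (continuous_closedP _) (@coord_continuous R 1 m ord0 x)); exact: closed_ge.
apply: (proj1 (continuous_closedP _) (@sum_coord_continuous m)); exact: closed_eq.
Qed.

Lemma simplex_compact (m : nat) : compact (@simplex R m).
Proof.
have C := @rV_compact R m (fun _ => `[0, 1]%classic) (fun _ => @segment_compact R 0 1).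
apply: (subclosed_compact (simplex_closed m) C).
move=> v [v0 v1] i /=; rewrite in_itv /= v0 /=.
rewrite -v1 (bigD1 i) //= lerDl; apply: sumr_ge0 => j _; exact: v0.
Qed.

Lemma simplex_nonempty (m : nat) : (0 < m)%N -> (@simplex R m) !=set0.
Proof.
move=> hm; exists (const_mx (m%:R^-1)); split.
  by move=> x; rewrite mxE invr_ge0 ler0n.
under eq_bigr do rewrite mxE.
rewrite sumr_const card_ord -[LHS]mulr_natr mulVf // pnatr_eq0 -lt0n.
exact: hm.
Qed.

End Topo.


Arguments Gf {R}.
Arguments pt {R}.
Arguments Uf {R}.
Arguments phi {R}.
Arguments ut {R}.

Section PhiCont.
Variables (R : realType) (u : R -> R).
Hypothesis hu0 : u 0 = 0.
Hypothesis hd : forall t, 0 < t -> derivable u t 1.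
Hypothesis hr : exists l : R, (fun h : R => h^-1 * (u h - u 0)) @ (0:R)^'+ --> l.

Lemma ut_cont (t : R) : {for t, continuous (ut u)}.
Proof.
rewrite /prop_for /continuous_at /ut.
apply: cvgM; first exact: cvg_id.
exact: (@pt_cont R u hu0 hd hr t).
Qed.

Lemma Uf_cont (t : R) : 0 <= t -> {for t, continuous (Uf u)}.
Proof.
move=> t0.
have [dU _] := @Uf_der R u hu0 hd hr t (lt_le_trans (ltrN10 R) t0).
by apply/differentiable_continuous; apply/derivable1_diffP.
Qed.

Lemma phi_cont (N y : R) : 0 < N -> 0 <= y -> {for y, continuous (phi u N)}.
Proof.
move=> Np y0.
rewrite /prop_for /continuous_at /phi.
have HN : (fun z : R => N * z) @ y --> N * y by apply: cvgMl_tmp; exact: cvg_id.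
apply: cvgMr_tmp; apply: cvgD.
  exact: (continuous_cvg _ (ut_cont (N * y)) HN).
apply: cvgMl_tmp.
have C : {for N * y, continuous (Uf u)} by apply: Uf_cont; rewrite mulr_ge0 // ltW.
exact: (continuous_cvg _ C HN).
Qed.

End PhiCont.


Arguments Gf {R}.
Arguments pt {R}.
Arguments Uf {R}.
Arguments phi {R}.
Arguments ut {R}.
Arguments others {R n m}.
Arguments payoff_dev {R n m}.

Section Main.
Variables (R : realType) (n m : nat) (hm : (0 < m)%N).
Variables (u : 'I_m -> R -> R) (c : 'rV[R]_m -> R).
Hypothesis hu0 : forall x, u x 0 = 0.
Hypothesis hu_conc : forall x, concave_on nonneg_half (u x).
Hypothesis hu_diff : forall x, differentiable_on_nonneg (u x).
Hypothesis hc_conv : convex_on_rV (@simplex R m) c.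
Hypothesis hc_diff : forall v, @simplex R m v -> differentiable c v.
Hypothesis hn : (0 < n)%N.

Let hd x : forall t, 0 < t -> derivable (u x) t 1 := (hu_diff x).1.
Let hr x : exists l : R, (fun h : R => h^-1 * (u x h - u x 0)) @ (0:R)^'+ --> l :=
  (hu_diff x).2.

Let N : R := n%:R.
Let N1 : 1 <= N. Proof. by rewrite /N ler1n. Qed.
Let Np : 0 < N. Proof. by rewrite /N ltr0n. Qed.

Definition Phi (v : 'rV[R]_m) : R := \sum_(x < m) phi (u x) N (v ord0 x) - c v.

Lemma Phi_cont : {within @simplex R m, continuous Phi}.
Proof.
apply: continuous_in_subspaceT => v; rewrite inE => sv.
have S : (fun w : 'rV[R]_m => \sum_(x < m) phi (u x) N (w ord0 x)) @ nbhs v -->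
   \sum_(x < m) phi (u x) N (v ord0 x).
  apply: (@cvg_sumR R _ (nbhs v) _) => x.
  have C := @phi_cont R (u x) (hu0 x) (hd x) (hr x) N (v ord0 x) Np ((proj1 sv) x).
  exact: (continuous_cvg _ C (@coord_continuous R 1 m ord0 x v)).
have Cc : c @ nbhs v --> c v by apply/differentiable_continuous; exact: hc_diff.
exact: (cvgB S Cc).
Qed.

Lemma exists_max : exists2 vs, vs \in @simplex R m & forall t, t \in @simplex R m -> Phi t <= Phi vs.
Proof.
apply: EVT_max_rV; [exact: simplex_nonempty|exact: simplex_compact|exact: Phi_cont].
Qed.


Lemma others_const (vs : 'rV[R]_m) i x :
  others (fun _ : 'I_n => vs) i x = (N - 1) * vs ord0 x.
Proof.
rewrite /others.
have H : \sum_(j < n) vs ord0 x = vs ord0 x + \sum_(j < n | j != i) vs ord0 x.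
  by rewrite (bigD1 i).
rewrite sumr_const card_ord -mulr_natl in H.
by rewrite mulrBl mul1r /N H [vs ord0 x + _]addrC addrK.
Qed.

Lemma nash_exists : exists S : profile R n m, is_nash u c S.
Proof.
have [vs vsS vmax] := exists_max.
rewrite inE in vsS.
exists (fun _ => vs); split; first by move=> i.
move=> i; split => // w ws.
rewrite !payoff_dev.
rewrite [X in X - c w <= _](eq_bigr (fun x => Gf (u x) ((N - 1) * vs ord0 x) (w ord0 x))); last first.
  by move=> x _; rewrite others_const.
rewrite [X in _ <= X - c vs](eq_bigr (fun x => Gf (u x) ((N - 1) * vs ord0 x) (vs ord0 x))); last first.
  by move=> x _; rewrite others_const.
pose D := fun h : R => \sum_(x < m) h^-1 * ((Gf (u x) ((N - 1) * vs ord0 x) (vs ord0 x + h * (w ord0 x - vs ord0 x))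
     - Gf (u x) ((N - 1) * vs ord0 x) (vs ord0 x))
   - (phi (u x) N (vs ord0 x + h * (w ord0 x - vs ord0 x)) - phi (u x) N (vs ord0 x))).
have LIM : D @ (0:R)^'+ --> 0.
  have yd : forall x, 0 <= vs ord0 x + (w ord0 x - vs ord0 x).
    by move=> x; rewrite addrC subrK; exact: (proj1 ws x).
  have := @cvg_sumR R R (0:R)^'+ _ 'I_m (index_enum 'I_m) _ (fun _ => 0)
    (fun x => @match_cvg R (u x) (hu0 x) (hd x) (hr x) N (vs ord0 x) (w ord0 x - vs ord0 x)
       N1 (proj1 vsS x) (yd x)).
  by move=> HH; rewrite big1 // in HH; exact: HH.
rewrite -subr_le0.
apply: (cvgr_to_ge LIM).
near=> h.
have h0 : 0 < h by near: h; exact: nbhs_right_gt.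
have h1 : h <= 1 by near: h; apply: nbhs_right_le; exact: ltr01.
have hl : 0 <= h <= 1 by rewrite ltW.
set z := h *: w + (1 - h) *: vs.
have zs : simplex z := @simplex_conv R m w vs h ws vsS hl.
have zE : forall x, vs ord0 x + h * (w ord0 x - vs ord0 x) = z ord0 x.
  by move=> x; rewrite /z !mxE; ring.
rewrite /D /=.
rewrite [X in _ <= X](eq_bigr (fun x => h^-1 * ((Gf (u x) ((N - 1) * vs ord0 x) (z ord0 x)
     - Gf (u x) ((N - 1) * vs ord0 x) (vs ord0 x))
   - (phi (u x) N (z ord0 x) - phi (u x) N (vs ord0 x))))); last first.
  by move=> x _; rewrite zE.
have Phz := vmax z (mem_set zs); rewrite /Phi in Phz.
have Cz := hc_conv w vs h ws vsS hl; rewrite -/z in Cz.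
have conc : h * \sum_(x < m) Gf (u x) ((N - 1) * vs ord0 x) (w ord0 x)
   + (1 - h) * \sum_(x < m) Gf (u x) ((N - 1) * vs ord0 x) (vs ord0 x)
   <= \sum_(x < m) Gf (u x) ((N - 1) * vs ord0 x) (z ord0 x).
  rewrite !mulr_sumr -big_split; apply: ler_sum => x _; rewrite /z !mxE.
  apply: Gf_conc => //.
  - by rewrite mulr_ge0 // ?subr_ge0 //; exact: (proj1 vsS x).
  - exact: (proj1 ws x).
  - exact: (proj1 vsS x).
  - exact: hd.
rewrite -mulr_sumr !sumrB.
set A := \sum_(x < m) Gf (u x) ((N - 1) * vs ord0 x) (z ord0 x) in conc *.
set B := \sum_(x < m) Gf (u x) ((N - 1) * vs ord0 x) (w ord0 x) in conc *.
set C := \sum_(x < m) Gf (u x) ((N - 1) * vs ord0 x) (vs ord0 x) in conc *.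
set Fz := \sum_(x < m) phi (u x) N (z ord0 x) in Phz *.
set Fv := \sum_(x < m) phi (u x) N (vs ord0 x) in Phz *.
have key : h * (B - c w - (C - c vs)) <= A - C - (Fz - Fv).
  rewrite (_ : h * (B - c w - (C - c vs)) =
     (h * B + (1 - h) * C - C) - (h * c w + (1 - h) * c vs - c vs)); last by ring.
  apply: (@le_trans _ _ ((A - C) - (c z - c vs))).
    by apply: lerB; rewrite lerD2r.
  rewrite lerD2l lerN2.
  have HH : Fz - Fv <= c z - c vs.
    have H0 : 0 <= (Fv - c vs) - (Fz - c z) by rewrite subr_ge0.
    rewrite -subr_ge0 (_ : c z - c vs - (Fz - Fv) = Fv - c vs - (Fz - c z)) //; ring.
  exact: HH.
have -> : B - c w - (C - c vs) = h^-1 * (h * (B - c w - (C - c vs))).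
  by rewrite mulKf // gt_eqF.
by rewrite ler_wpM2l // invr_ge0 ltW.
Unshelve. all: by end_near.
Qed.
End Main.

Theorem proposition2 (R : realType) (n m : nat) (hm : (0 < m)%N)
  (u : 'I_m -> R -> R) (c : 'rV[R]_m -> R)
  (hu_nonneg : forall x t, 0 <= t -> 0 <= u x t)
  (hu0 : forall x, u x 0 = 0)
  (hu_conc : forall x, concave_on nonneg_half (u x))
  (hu_diff : forall x, differentiable_on_nonneg (u x))
  (hc_nonneg : forall v, simplex v -> 0 <= c v)
  (hc_conv : convex_on_rV (@simplex R m) c)
  (hc_diff : forall v, @simplex R m v -> differentiable c v)
  (hstrict : (exists x0 : 'I_m, forall x, x != x0 ->
                 strictly_concave_on nonneg_half (u x))
             \/ strictly_convex_on_rV (@simplex R m) c) :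
  (exists S : profile R n m, is_nash u c S) /\
  (forall S : profile R n m, is_nash u c S -> is_strict_nash u c S).
Proof.
split.
  have [n0|hn] := posnP n.
    subst n; exists (fun _ => 0); split; by case.
  exact: (@nash_exists R n m hm u c hu0 hu_conc hu_diff hc_conv hc_diff hn).
move=> S; apply: (@nash_strict R n m u c hu0 hu_conc) => //.
by move=> x; exact: (hu_diff x).1.
Qed.
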